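(* For every policy $\pi$, every bounded $V:\mathcal S\to\mathbb R$, every bounded heuristic $h$ and every $\lambda\in[0,1]$, $$\frac1{1-\gamma}\,\mathbb E_{(s,a)\sim d^\pi}\big[V(s)-(\widetilde{\mathcal B}V)(s,a)\big]=\lambda\big(V(d_0)-\widetilde V^\pi(d_0)\big)+\frac{1-\lambda}{1-\gamma}\big(V(d^\pi)-\widetilde V^\pi(d^\pi)\big).$$
   Context: Let $\mathcal M=(\mathcal S,\mathcal A,P,r,\gamma)$ be a discounted MDP with transition kernel $P(\cdot|s,a)$, reward $r:\mathcal S\times\mathcal A\to[0,1]$ and discount $\gamma\in[0,1)$. A policy $\pi$ is a Markov kernel from $\mathcal S$ to distributions on $\mathcal A$; $\rho^\pi(s)$ (resp. $\rho^\pi(d_0)$) is the trajectory law with $s_0=s$ (resp. $s_0\sim d_0$), $a_t\sim\pi(\cdot|s_t)$, $s_{t+1}\sim P(\cdot|s_t,a_t)$. For $V:\mathcal S\to\mathbb R$ and a distribution $d$, $V(d)=\mathbb E_{s\sim d}[V(s)]$. A fixed initial distribution $d_0$ is given; $d_t^\pi$ is the law of $s_t$ under $\rho^\pi(d_0)$, $d^\pi=(1-\gamma)\sum_t\gamma^td_t^\pi$, $d^\pi(s,a)=d^\pi(s)\pi(a|s)$. Reshaped MDP: $\widetilde{\mathcal M}=(\mathcal S,\mathcal A,P,\widetilde r,\widetilde\gamma)$ with $\widetilde r(s,a)=r(s,a)+(1-\lambda)\gamma\,\mathbb E_{s'\sim P(\cdot|s,a)}[h(s')]$, $\widetilde\gamma=\lambda\gamma$;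 $\widetilde V^\pi(s)=\mathbb E_{\rho^\pi(s)}[\sum_t(\lambda\gamma)^t\widetilde r(s_t,a_t)]$; and $(\widetilde{\mathcal B}V)(s,a)=\widetilde r(s,a)+\widetilde\gamma\,\mathbb E_{s'\sim P(\cdot|s,a)}[V(s')]$. *)

(* Defs.v *)
From HB Require Import structures.
From mathcomp Require Import all_boot all_order all_algebra.
From mathcomp Require Import all_classical all_reals all_analysis.

Set Implicit Arguments.
Unset Strict Implicit.
Unset Printing Implicit Defensive.

Import Order.TTheory GRing.Theory Num.Theory.
Local Open Scope classical_set_scope.
Local Open Scope ring_scope.

Definition expect {d} {T : measurableType d} {R : realType}
  (mu : {measure set T -> \bar R}) (f : T -> R) : R :=
  Rintegral mu setT f.

Definition rsum {R : realType} (u : nat -> R) : R :=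
  limn (fun n => \sum_(t < n) u t).

Section MDP.
Context {d1 d2 : measure_display} {S : measurableType d1} {A : measurableType d2}
  {R : realType}.

Definition Pexp (P : R.-pker (S * A) ~> S) (f : S -> R) : S * A -> R :=
  fun sa => expect (P sa) f.

Definition piexp (pi : R.-pker S ~> A) (g : S * A -> R) : S -> R :=
  fun s => expect (pi s) (fun a => g (s, a)).

Definition Mpi (P : R.-pker (S * A) ~> S) (pi : R.-pker S ~> A) (f : S -> R)
  : S -> R := piexp pi (Pexp P f).

(* E_{s ~ d_t^pi}[f s] where d_t^pi is the law of s_t under rho^pi(d0):
   d_0^pi = d0 and d_{t+1}^pi = law of s' with s ~ d_t^pi, a ~ pi(.|s),
   s' ~ P(.|s,a). *)
Fixpoint dt_expect (P : R.-pker (S * A) ~> S) (pi : R.-pker S ~> A)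
  (d0 : probability S R) (t : nat) (f : S -> R) : R :=
  match t with
  | O => expect d0 f
  | t'.+1 => dt_expect P pi d0 t' (Mpi P pi f)
  end.

Definition dpi_expect (P : R.-pker (S * A) ~> S) (pi : R.-pker S ~> A)
  (d0 : probability S R) (gamma : R) (f : S -> R) : R :=
  (1 - gamma) * rsum (fun t => gamma ^+ t * dt_expect P pi d0 t f).

Definition dpi_sa_expect (P : R.-pker (S * A) ~> S) (pi : R.-pker S ~> A)
  (d0 : probability S R) (gamma : R) (g : S * A -> R) : R :=
  dpi_expect P pi d0 gamma (piexp pi g).

Definition rtilde (P : R.-pker (S * A) ~> S) (r : S * A -> R) (h : S -> R)
  (gamma lambda : R) : S * A -> R :=
  fun sa => r sa + (1 - lambda) * gamma * Pexp P h sa.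

(* reshaped value  V~^pi(s) = E_{rho^pi(s)}[sum_t (lambda gamma)^t r~(s_t,a_t)]
   = sum_t (lambda gamma)^t E_{rho^pi(s)}[r~(s_t,a_t)], where
   E_{rho^pi(s)}[r~(s_t,a_t)] = (M^t (pi r~))(s). *)
Definition Vtilde (P : R.-pker (S * A) ~> S) (pi : R.-pker S ~> A)
  (r : S * A -> R) (h : S -> R) (gamma lambda : R) : S -> R :=
  fun s => rsum (fun t => (lambda * gamma) ^+ t *
             iter t (Mpi P pi) (piexp pi (rtilde P r h gamma lambda)) s).

Definition Btilde (P : R.-pker (S * A) ~> S) (r : S * A -> R) (h : S -> R)
  (gamma lambda : R) (V : S -> R) : S * A -> R :=
  fun sa => rtilde P r h gamma lambda sa + lambda * gamma * Pexp P V sa.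

End MDP.

(* Main.v *)
Require Import Defs.
From HB Require Import structures.
From mathcomp Require Import all_boot all_order all_algebra.
From mathcomp Require Import all_classical all_reals all_analysis.
From mathcomp Require Import measurable_realfun ring lra.
Import Order.TTheory GRing.Theory Num.Theory.
Import numFieldNormedType.Exports.
Local Open Scope classical_set_scope.
Local Open Scope ring_scope.

Definition bm {d} {T : measurableType d} {R : realType} (f : T -> R) :=
  measurable_fun setT f /\ exists K : R, forall x, `|f x| <= K.

Section BM.
Context {d} {T : measurableType d} {R : realType}.

Lemma bm_cst (c : R) : @bm _ T R (fun=> c).
Proof. by split => //; exists `|c|. Qed.

Lemma bmD (f g : T -> R) : bm f -> bm g -> bm (fun x => f x + g x).
Proof.
move=> [mf [K hK]] [mg [L hL]]; split; first exact: measurable_funD.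
exists (K + L) => x; rewrite (le_trans (ler_normD _ _))//; exact: lerD.
Qed.

Lemma bmZ (f : T -> R) a : bm f -> bm (fun x => a * f x).
Proof.
move=> [mf [K hK]]; split; first exact: measurable_funM.
exists (`|a| * K) => x; rewrite normrM ler_wpM2l//.
Qed.

Lemma bm_sum (F : nat -> T -> R) n : (forall t, bm (F t)) ->
  bm (fun x => \sum_(t < n) F t x).
Proof.
move=> bF; elim: n => [|n IH].
  by rewrite (_ : (fun x => _) = fun=> 0); [exact: bm_cst|apply: funext => x; rewrite big_ord0].
rewrite (_ : (fun x => _) = fun x => \sum_(t < n) F t x + F n x); first exact: bmD.
by apply: funext => x; rewrite big_ord_recr.
Qed.

Lemma bm_of (f : T -> R) : measurable_fun setT f -> bounded_fun f -> bm f.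
Proof.
move=> mf [M [_ HM]]; split => //; exists (`|M| + 1) => x.
apply: (HM (`|M| + 1)) => //.
have := ler_norm M; lra.
Qed.

Lemma bm_lim (f_ : nat -> T -> R) (f : T -> R) K :
  (forall n, measurable_fun setT (f_ n)) ->
  (forall n x, `|f_ n x| <= K) ->
  (forall x, f_ n x @[n --> \oo] --> f x) ->
  measurable_fun setT f /\ forall x, `|f x| <= K.
Proof.
move=> mf_ hK cf; split.
  by apply: (measurable_fun_cvg mf_) => x _; exact: cf.
move=> x.
apply: (@closed_cvg _ _ \oo _ (fun n => `|f_ n x|) (fun y : R => y <= K) (@closed_le _ K)).
  by apply: nearW => n; exact: hK.
exact: cvg_norm.
Qed.
End BM.

Section Gen.
Context {d} {T : measurableType d} {R : realType}.
Context {mu : {measure set T -> \bar R}} (mu1 : mu setT = 1%E).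

Lemma bm_int (f : T -> R) : bm f -> mu.-integrable setT (EFin \o f).
Proof.
move=> [mf [K hK]]; apply/integrableP; split; first exact/measurable_EFinP.
apply: (le_lt_trans (integral_le_bound (`|K|)%:E _ _ _ _)) => //.
- exact/measurable_EFinP.
- by apply: aeW => x _ /=; rewrite lee_fin (le_trans (hK x))// ler_norm.
by rewrite mu1 mule1 ltry.
Qed.

Lemma expectD (f g : T -> R) : bm f -> bm g ->
  expect mu (fun x => f x + g x) = expect mu f + expect mu g.
Proof. by move=> bf bg; rewrite /expect RintegralD//; exact: bm_int. Qed.

Lemma expectB (f g : T -> R) : bm f -> bm g ->
  expect mu (fun x => f x - g x) = expect mu f - expect mu g.
Proof. by move=> bf bg; rewrite /expect RintegralB//; exact: bm_int. Qed.

Lemma expectZ (f : T -> R) c : bm f ->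
  expect mu (fun x => c * f x) = c * expect mu f.
Proof. by move=> bf; rewrite /expect RintegralZl//; exact: bm_int. Qed.

Lemma expect_cst c : expect mu (fun _ => c) = c.
Proof. by rewrite /expect Rintegral_cst// mu1 mulr1. Qed.

Lemma expect_ext (f g : T -> R) : f =1 g -> expect mu f = expect mu g.
Proof. by move=> fg; rewrite /expect; apply: eq_Rintegral => x _; rewrite fg. Qed.

Lemma expect_lin (f g : T -> R) a b : bm f -> bm g ->
  expect mu (fun x => a * f x + b * g x) = a * expect mu f + b * expect mu g.
Proof.
move=> bf bg; rewrite expectD; [|exact: bmZ|exact: bmZ].
by rewrite !expectZ.
Qed.

Lemma expect_norm (f : T -> R) K : measurable_fun setT f ->
  (forall x, `|f x| <= K) -> `|expect mu f| <= K.
Proof.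
move=> mf hK; have bf : bm f by split => //; exists K.
have bn : bm (fun x => `|f x|).
  split; first exact: measurableT_comp.
  by exists K => x; rewrite normr_id.
rewrite /expect (le_trans (le_normr_Rintegral _ _))//; first exact: bm_int.
rewrite -[X in _ <= X](expect_cst K) /expect.
apply: le_Rintegral => //; try exact: bm_int.
apply: bm_int; split => //; by exists `|K|.
Qed.

Lemma expect_cvg (f_ : nat -> T -> R) (f : T -> R) K :
  (forall n, measurable_fun setT (f_ n)) ->
  (forall n x, `|f_ n x| <= K) ->
  (forall x, f_ n x @[n --> \oo] --> f x) ->
  expect mu (f_ n) @[n --> \oo] --> expect mu f.
Proof.
move=> mf_ hK cf.
have mf : measurable_fun setT f by apply: (measurable_fun_cvg mf_) => x _; exact: cf.
have hKf x : `|f x| <= K.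
  apply: (@closed_cvg _ _ \oo _ (fun n => `|f_ n x|) (fun y : R => y <= K) (@closed_le _ K)).
    by apply: nearW => n; exact: hK.
  exact: cvg_norm.
have bfn n : bm (f_ n) by split => //; exists K.
have bf : bm f by split => //; exists K.
have H : (\int[mu]_(x in setT) (f_ n x)%:E)%E @[n --> \oo] -->
    (\int[mu]_(x in setT) (f x)%:E)%E.
  apply: (@dominated_cvg _ _ _ mu setT measurableT (fun n x => (f_ n x)%:E)
    (fun x => (f x)%:E) (fun=> K%:E)).
  - by move=> n; exact/measurable_EFinP.
  - by move=> x _; apply/fine_cvgP; split; [exact: nearW | exact: cf].
  - by [].
  - have bK : @bm _ T R (fun=> K) by split => //; exists `|K|.
    exact: (bm_int _ bK).
  - by move=> n x _ /=; rewrite lee_fin.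
rewrite /expect /Rintegral.
move: H; rewrite -(fineK (integrable_fin_num measurableT (bm_int _ bf))).
exact: fine_cvg.
Qed.
End Gen.

Section Kern.
Context {d d'} {X : measurableType d} {Y : measurableType d'} {R : realType}.
Variable k : R.-pker X ~> Y.

Let k1 x : k x setT = 1%E.
Proof. exact: (@prob_kernel _ _ _ _ _ k x). Qed.

Lemma bm_sec (g : X * Y -> R) x : bm g -> bm (fun y => g (x, y)).
Proof.
move=> [mg [K hK]]; split; last by exists K.
exact: measurable_fun_pair2.
Qed.

Lemma bm_kint (g : X * Y -> R) : bm g ->
  bm (fun x => expect (k x) (fun y => g (x, y))).
Proof.
move=> bg; have [mg [K hK]] := bg.
split; last first.
  exists K => x; apply: (expect_norm (k1 x)); [exact: (bm_sec _ x bg).1 | by move=> y; exact: hK].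
pose K' := `|K|.
have e x : expect (k x) (fun y => g (x, y)) =
    fine (\int[k x]_y ((g (x, y) + K')%:E)) - K'.
  rewrite -[fine _]/(expect (k x) (fun y => g (x, y) + K')).
  rewrite (expectD (k1 x)) //; first by rewrite (expect_cst (k1 x)) addrK.
  - exact: bm_sec.
  - by split => //; exists `|K'|.
rewrite (_ : (fun x => _) = (fun x => fine (\int[k x]_y ((g (x, y) + K')%:E)) - K')); last first.
  by apply: funext => x; exact: e.
apply: measurable_funB => //.
apply: measurableT_comp => //.
apply: (measurable_fun_integral_finite_kernel (fun xy => (g xy + K')%:E)).
- move=> z; rewrite lee_fin /K'.
  have := hK z; rewrite ler_norml => /andP[h1 _].
  have h2 := ler_norm K; lra.
- apply/measurable_EFinP; exact: measurable_funD.
Qed.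

End Kern.

Section Series.
Context {R : realType}.

Lemma geo_sum_le (c : R) n : 0 <= c < 1 -> \sum_(t < n) c ^+ t <= (1 - c)^-1.
Proof.
move=> /andP[c0 c1].
have e : (1 - c) * \sum_(t < n) c ^+ t = 1 - c ^+ n.
  elim: n => [|n IH]; first by rewrite big_ord0 expr0 mulr0 subrr.
  by rewrite big_ord_recr /= mulrDr IH exprS; ring.
have hc : 0 < 1 - c by lra.
rewrite -(ler_pM2l hc) e mulfV ?gt_eqF//.
have := exprn_ge0 n c0; lra.
Qed.

Lemma rsum_cvg (u : nat -> R) B c : 0 <= c < 1 ->
  (forall t, `|u t| <= B * c ^+ t) -> cvgn (fun n => \sum_(t < n) u t).
Proof.
move=> /andP[c0 c1] hu.
have B0 : 0 <= B by have := hu 0%N; rewrite expr0 mulr1; apply: le_trans.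
have -> : (fun n => \sum_(t < n) u t) = series u.
  by apply: funext => n; rewrite /series /= big_mkord.
apply: normed_cvg.
apply: (@series_le_cvg _ _ (geometric B c)).
- by move=> n; rewrite normr_ge0.
- by move=> n; rewrite /geometric /= mulr_ge0// exprn_ge0.
- by move=> n; rewrite /geometric /=; exact: hu.
- by apply: is_cvg_geometric_series; rewrite ger0_norm.
Qed.

End Series.

Section Main.
Context {d1 d2 : measure_display} {S : measurableType d1} {A : measurableType d2}
  {R : realType} (P : R.-pker (S * A) ~> S) (pi : R.-pker S ~> A)
  (d0 : probability S R).

Let P1 sa : P sa setT = 1%E. Proof. exact: (@prob_kernel _ _ _ _ _ P sa). Qed.
Let pi1 s : pi s setT = 1%E. Proof. exact: (@prob_kernel _ _ _ _ _ pi s). Qed.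
Let d01 : d0 setT = 1%E. Proof. exact: probability_setT. Qed.

Lemma bm_Pexp {f} : bm f -> bm (Pexp P f).
Proof.
move=> bf; have bf2 : bm (fun p : (S * A) * S => f p.2).
  case: bf => mf [K hK]; split; last by exists K => p; exact: hK.
  exact: measurableT_comp.
exact: (bm_kint P _ bf2).
Qed.

Lemma bm_piexp {g} : bm g -> bm (piexp pi g).
Proof. move=> bg; exact: (bm_kint pi _ bg). Qed.

Lemma bm_M {f} : bm f -> bm (Mpi P pi f).
Proof. by move=> bf; apply: bm_piexp; exact: bm_Pexp. Qed.

Lemma Pexp_lin f g a b : bm f -> bm g ->
  Pexp P (fun s => a * f s + b * g s) = fun sa => a * Pexp P f sa + b * Pexp P g sa.
Proof. by move=> bf bg; apply: funext => sa; exact: (expect_lin (P1 sa)). Qed.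

Lemma M_lin f g a b : bm f -> bm g ->
  Mpi P pi (fun s => a * f s + b * g s) = fun s => a * Mpi P pi f s + b * Mpi P pi g s.
Proof.
move=> bf bg; apply: funext => s; rewrite /Mpi /piexp Pexp_lin//.
apply: (expect_lin (pi1 s) (fun a => Pexp P f (s, a)) (fun a => Pexp P g (s, a))).
- exact: (bm_sec _ s (bm_Pexp bf)).
- exact: (bm_sec _ s (bm_Pexp bg)).
Qed.

Lemma M_norm f K : bm f -> (forall x, `|f x| <= K) -> forall s, `|Mpi P pi f s| <= K.
Proof.
move=> bf hK s; rewrite /Mpi /piexp; apply: (expect_norm (pi1 s)).
- exact: (bm_sec _ s (bm_Pexp bf)).1.
- move=> a; apply: (expect_norm (P1 _)); [exact: bf.1 | exact: hK].
Qed.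

Lemma M_cvg (f_ : nat -> S -> R) f K : (forall n, bm (f_ n)) ->
  (forall n x, `|f_ n x| <= K) -> (forall x, f_ n x @[n --> \oo] --> f x) ->
  forall s, Mpi P pi (f_ n) s @[n --> \oo] --> Mpi P pi f s.
Proof.
move=> bf hK cf s; rewrite /Mpi /piexp.
apply: (expect_cvg (pi1 s) _ _ K).
- by move=> n; exact: (bm_sec _ s (bm_Pexp (bf n))).1.
- move=> n a; apply: (expect_norm (P1 _)); [exact: (bf n).1 | exact: hK].
- move=> a; rewrite /Pexp; apply: (expect_cvg (P1 _) _ _ K) => //.
  by move=> n; exact: (bf n).1.
Qed.

Lemma dt_lin t f g a b : bm f -> bm g ->
  dt_expect P pi d0 t (fun s => a * f s + b * g s)
  = a * dt_expect P pi d0 t f + b * dt_expect P pi d0 t g.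
Proof.
elim: t f g => [|t IH] f g bf bg /=; first exact: (expect_lin d01).
by rewrite M_lin// IH//; exact: bm_M.
Qed.

Lemma dt_norm t f K : bm f -> (forall x, `|f x| <= K) ->
  `|dt_expect P pi d0 t f| <= K.
Proof.
elim: t f => [|t IH] f bf hK /=; first exact: (expect_norm d01 _ _ bf.1 hK).
by apply: IH; [exact: bm_M | exact: M_norm].
Qed.

End Main.

Theorem mainTheorem12 (d1 d2 : measure_display) (S : measurableType d1)
  (A : measurableType d2) (R : realType)
  (P : R.-pker (S * A) ~> S) (r : S * A -> R) (gamma : R)
  (d0 : probability S R)
  (hr_meas : measurable_fun setT r) (hr01 : forall sa, 0 <= r sa <= 1)
  (hgamma : 0 <= gamma < 1)
  (pi : R.-pker S ~> A) (V : S -> R) (h : S -> R) (lambda : R)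
  (hV_meas : measurable_fun setT V) (hV_bdd : bounded_fun V)
  (hh_meas : measurable_fun setT h) (hh_bdd : bounded_fun h)
  (hlambda : 0 <= lambda <= 1) :
  (1 - gamma)^-1 *
    dpi_sa_expect P pi d0 gamma
      (fun sa => V sa.1 - Btilde P r h gamma lambda V sa)
  = lambda * (expect d0 V - expect d0 (Vtilde P pi r h gamma lambda))
    + (1 - lambda) / (1 - gamma) *
      (dpi_expect P pi d0 gamma V
       - dpi_expect P pi d0 gamma (Vtilde P pi r h gamma lambda)).
Proof.
have pi1 s : pi s setT = 1%E := @prob_kernel _ _ _ _ _ pi s.
have d01 : d0 setT = 1%E := probability_setT d0.
move: hgamma hlambda => /andP[g0 g1] /andP[l0 l1].
pose c := lambda * gamma.
have c0 : 0 <= c by rewrite mulr_ge0.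
have c1 : c < 1 by rewrite /c; nra.
have hc : 0 <= c < 1 by apply/andP.
have br : bm r.
  split => //; exists 1 => sa; have /andP[a b] := hr01 sa; rewrite ger0_norm//.
have bV := bm_of _ hV_meas hV_bdd.
have bh := bm_of _ hh_meas hh_bdd.
have brt : bm (rtilde P r h gamma lambda).
  rewrite /rtilde; apply: bmD => //; apply: bmZ; exact: bm_Pexp.
pose g := piexp pi (rtilde P r h gamma lambda).
have bg : bm g by exact: bm_piexp.
have [_ [B0 hB0]] := bg.
pose B := `|B0|.
have hB s : `|g s| <= B by rewrite (le_trans (hB0 s))// ler_norm.
pose G t := iter t (Mpi P pi) g.
have bG t : bm (G t) by elim: t => [|t IH] //=; exact: bm_M.
have hG t s : `|G t s| <= B.
  by elim: t s => [|t IH] s //=; exact: (M_norm P pi _ _ (bG t) IH s).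
pose Sn n s := \sum_(t < n) c ^+ t * G t s.
have bS n : bm (Sn n).
  exact: (bm_sum (fun t x => c ^+ t * G t x) n (fun t => bmZ _ _ (bG t))).
pose KS := B * (1 - c)^-1.
have hS n s : `|Sn n s| <= KS.
  rewrite (le_trans (ler_norm_sum _ _ _))//.
  apply: (@le_trans _ _ (\sum_(t < n) B * c ^+ t)).
    apply: ler_sum => t _; rewrite normrM ger0_norm ?exprn_ge0// mulrC.
    by rewrite ler_wpM2r ?exprn_ge0.
  by rewrite -mulr_sumr ler_wpM2l // ?normr_ge0 // (geo_sum_le c n hc).
pose Vt := Vtilde P pi r h gamma lambda.
have cS s : Sn n s @[n --> \oo] --> Vt s.
  apply: (rsum_cvg (fun t => c ^+ t * G t s) B c hc) => t.
  by rewrite normrM ger0_norm ?exprn_ge0// mulrC ler_wpM2r ?exprn_ge0.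
have [mVt hVt] := bm_lim _ _ _ (fun n => (bS n).1) hS cS.
have bVt : bm Vt by split => //; exists KS.
have MS n s : Mpi P pi (Sn n) s = \sum_(t < n) c ^+ t * G t.+1 s.
  elim: n s => [|n IH] s.
    have -> : Sn 0%N = (fun s => 0 * g s + 0 * g s).
      by apply: funext => x; rewrite /Sn big_ord0 mul0r addr0.
    by rewrite M_lin // big_ord0 !mul0r addr0.
  have -> : Sn n.+1 = (fun s => 1 * Sn n s + c ^+ n * G n s).
    by apply: funext => x; rewrite /Sn big_ord_recr /= mul1r.
  by rewrite M_lin // IH big_ord_recr /= mul1r.
have Bell s : Vt s = g s + c * Mpi P pi Vt s.
  have h1 : Sn n.+1 s @[n --> \oo] --> Vt s.
    by have := cS s; rewrite -cvg_shiftS.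
  have h2 : Sn n.+1 s @[n --> \oo] --> g s + c * Mpi P pi Vt s.
    have e : (fun n => Sn n.+1 s) = (fun n => g s + c * Mpi P pi (Sn n) s).
      apply: funext => n; rewrite MS /Sn big_ord_recl /= expr0 mul1r mulr_sumr.
      congr (_ + _); apply: eq_bigr => t _; by rewrite /bump /= add0n exprS mulrA.
    rewrite e; apply: cvgD; first exact: cvg_cst.
    apply: cvgMl_tmp; exact: (M_cvg P pi Sn Vt KS bS hS cS s).
  exact: (cvg_unique _ h1 h2).
pose D := fun s => 1 * V s + (-1) * Vt s.
have bD : bm D by apply: bmD; apply: bmZ.
have hpi : piexp pi (fun sa => V sa.1 - Btilde P r h gamma lambda V sa)
    = fun s => 1 * D s + (- c) * Mpi P pi D s.
  apply: funext => s; rewrite /D M_lin // Bell.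
  rewrite /piexp /Btilde.
  have bsr := bm_sec _ s brt.
  have bsv := bm_sec _ s (bm_Pexp P bV).
  transitivity (expect (pi s) (fun a => 1 * (fun=> V s) a + (-1) *
     (fun a => 1 * rtilde P r h gamma lambda (s, a) + c * Pexp P V (s, a)) a)).
    by apply: expect_ext => a /=; rewrite /c; ring.
  rewrite (expect_lin (pi1 s)); [|exact: bm_cst|by apply: bmD; apply: bmZ].
  rewrite (expect_lin (pi1 s)) // (expect_cst (pi1 s)).
  rewrite /g /piexp /Mpi /piexp; ring.
pose a t := dt_expect P pi d0 t D.
have [_ [KD hKD]] := bD.
have bnd (f : S -> R) K : bm f -> (forall x, `|f x| <= K) ->
    cvgn (fun n => \sum_(t < n) gamma ^+ t * dt_expect P pi d0 t f).
  move=> bf hf; have g01 : 0 <= gamma < 1 by apply/andP.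
  apply: (rsum_cvg (fun t => gamma ^+ t * dt_expect P pi d0 t f) K gamma g01) => t; rewrite normrM ger0_norm ?exprn_ge0// mulrC ler_wpM2r ?exprn_ge0//.
  exact: (dt_norm P pi d0 t f K bf hf).
have cL := bnd D KD bD hKD.
pose L := rsum (fun t => gamma ^+ t * a t).
have da t : dt_expect P pi d0 t (fun s => 1 * D s + - c * Mpi P pi D s)
    = a t - c * a t.+1.
  by rewrite dt_lin //; [rewrite /a /=; ring | exact: bm_M].
have LHS : rsum (fun t => gamma ^+ t *
     dt_expect P pi d0 t (fun s => 1 * D s + - c * Mpi P pi D s))
    = L - lambda * (L - a 0%N).
  apply: cvg_lim => //.
  have e : (fun n => \sum_(t < n) gamma ^+ t *
     dt_expect P pi d0 t (fun s => 1 * D s + - c * Mpi P pi D s))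
    = (fun n => \sum_(t < n) gamma ^+ t * a t
        - lambda * (\sum_(t < n.+1) gamma ^+ t * a t - a 0%N)).
    apply: funext => n; under eq_bigr do rewrite da.
    rewrite big_ord_recl /= expr0 mul1r.
    have -> : \sum_(i < n) gamma ^+ bump 0 i * a (bump 0 i)
        = \sum_(i < n) gamma * (gamma ^+ i * a i.+1).
      by apply: eq_bigr => i _; rewrite /bump /= ?add0n exprS mulrA.
    rewrite -mulr_sumr.
    have -> : \sum_(i < n) gamma ^+ i * (a i - c * a i.+1)
        = \sum_(i < n) gamma ^+ i * a i - c * \sum_(i < n) gamma ^+ i * a i.+1.
      by rewrite mulr_sumr -sumrB; apply: eq_bigr => i _; ring.
    rewrite /c; ring.
  rewrite e; apply: cvgB; first exact: cL.
  apply: cvgMl_tmp; apply: cvgB; last exact: cvg_cst.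
  by have := cL; rewrite -cvg_shiftS.
have RHS1 : expect d0 V - expect d0 Vt = a 0%N.
  by rewrite /a /= (expect_lin d01) //; ring.
have RHS2 : rsum (fun t => gamma ^+ t * dt_expect P pi d0 t V)
    - rsum (fun t => gamma ^+ t * dt_expect P pi d0 t Vt) = L.
  have [KV hKV] := bV.2.
  have cV := bnd V KV bV hKV.
  have cVt := bnd Vt KS bVt hVt.
  apply/esym; apply: cvg_lim => //.
  have e : (fun n => \sum_(t < n) gamma ^+ t * a t)
    = (fun n => \sum_(t < n) gamma ^+ t * dt_expect P pi d0 t V
        - \sum_(t < n) gamma ^+ t * dt_expect P pi d0 t Vt).
    apply: funext => n; rewrite -sumrB; apply: eq_bigr => t _.
    by rewrite /a dt_lin //; ring.
  by rewrite e; apply: cvgB.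
rewrite /dpi_sa_expect /dpi_expect hpi LHS.
rewrite -mulrBr RHS2 RHS1.
have hg : 1 - gamma != 0 by rewrite subr_eq0 gt_eqF.
by field.
Qed.
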